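(* Let $N,M$ be positive integers with $\gcd(N,M)=1$, let $(I_n^t,V_n^t)$ be a solution of hpdToda with smooth spectral curve $C$, and let $(g_1,\dots,g_N)^T$ be an eigenvector of $X=X_t(y)$ with eigenvalue $x$, $(x,y)\in C$. Then: (i) if $k$ is the local coordinate around $P$ with $x=k^{-M}+\cdots$, $y=k^{-N}+\cdots$, then $g_i/g_N=k^{N-i}+\cdots$ for $i=1,\dots,N-1$; (ii) if $k$ is a local coordinate around $Q$, then $g_i/g_N\sim k^{-N+i}$ for $i=1,\dots,N-1$.
   Context: hpdToda: for all $n,t\in\mathbb{Z}$, $I_n^{t+M}=I_n^t+V_n^t-V_{n-1}^{t+1}$, $V_n^{t+1}=I_{n+1}^tV_n^t/I_n^{t+M}$, $I_{n+N}^t=I_n^t$, $V_{n+N}^t=V_n^t$, with $\prod_{n=1}^N I_n^t\neq\prod_{n=1}^N V_n^t$. $L_t(y)$: $N\times N$ matrix with $1$ on the diagonal, $(L_t)_{i+1,i}=V_i^t$ ($1\le i\le N-1$), $(L_t)_{1,N}=V_N^t/y$, zeros elsewhere; $R_t(y)$: $(R_t)_{i,i}=I_i^t$, $(R_t)_{i,i+1}=1$, $(R_t)_{N,1}=y$, zeros elsewhere; $X_t(y)=L_t(y)R_{t+M-1}(y)\cdots R_t(y)$. The spectral curve $C$ is the (assumed smooth) completion of $\det(X_t(y)-xE)=0$. $C$ contains the point $P=(x,y)=(\infty,\infty)$, around which there is a local coordinate $k$ with $x=k^{-M}+\cdots$, $y=k^{-N}+\cdots$, and the point $Q=(\infty,0)$,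 around which there is a local coordinate $k$ with $x=\mathcal{E}k^{-1}+\cdots$, $y=k^N+\cdots$, where $\mathcal{E}=\prod_{n=1}^N\prod_{j=0}^{M-1}I_n^j\cdot\prod_{n=1}^NV_n^0$. The ratios $g_i/g_N$ are meromorphic functions on $C$. For meromorphic $f,h$ and $p\in C$, ''$f\sim h$ around $p$'' means $0<\lim_{z\to p}|f(z)/h(z)|<+\infty$; ''$=k^a+\cdots$'' means the Laurent expansion in $k$ has leading term $k^a$. *)

(* Defs.v *)
From HB Require Import structures.
From mathcomp Require Import all_boot all_order all_algebra.
From mathcomp Require Import complex.
From mathcomp Require Import reals.
Set Implicit Arguments. Unset Strict Implicit. Unset Printing Implicit Defensive.
Import Order.TTheory GRing.Theory Num.Theory.
Local Open Scope ring_scope.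
Local Open Scope complex_scope.

Section Toda.
Variable R : realType.
Local Notation C := (R[i]).

Definition hpdToda (N M : nat) (I V : int -> int -> C) : Prop :=
  [/\ forall n t : int, I n (t + M%:Z) = I n t + V n t - V (n - 1) (t + 1),
      forall n t : int, V n (t + 1) = I (n + 1) t * V n t / I n (t + M%:Z),
      forall n t : int, I (n + N%:Z) t = I n t,
      forall n t : int, V (n + N%:Z) t = V n t &
      forall t : int, \prod_(i < N) I (i.+1)%:Z t != \prod_(i < N) V (i.+1)%:Z t].

(* Row/column index i : 'I_N stands for the paper's index i+1 in {1..N}. *)
Definition Lmat (N : nat) (V : int -> int -> C) (t : int) (y : C) : 'M[C]_N :=
  \matrix_(i < N, j < N)
    ((i == j)%:R
     + (i == j.+1 :> nat)%:R * V (j.+1)%:Z t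
     + ((i == 0 :> nat) && (j == N.-1 :> nat))%:R * (V N%:Z t / y)).

Definition Rmat (N : nat) (I : int -> int -> C) (t : int) (y : C) : 'M[C]_N :=
  \matrix_(i < N, j < N)
    ((i == j)%:R * I (i.+1)%:Z t
     + (j == i.+1 :> nat)%:R
     + ((i == N.-1 :> nat) && (j == 0 :> nat))%:R * y).

Fixpoint Rprod (N : nat) (I : int -> int -> C) (t : int) (m : nat) (y : C)
  : 'M[C]_N :=
  match m with
  | 0 => 1%:M
  | m'.+1 => Rmat N I (t + m'%:Z) y *m Rprod N I t m' y
  end.

Definition Xmat (N M : nat) (I V : int -> int -> C) (t : int) (y : C)
  : 'M[C]_N := Lmat N V t y *m Rprod N I t M y.

Definition specF (N M : nat) (I V : int -> int -> C) (t : int) (x y : C) : C :=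
  \det (Xmat N M I V t y - x%:M).

Definition lim_at0 (f : C -> C) (l : C) : Prop :=
  forall e : C, 0 < e -> exists2 d : C, 0 < d &
    forall k : C, 0 < `|k| < d -> `|f k - l| < e.

Definition has_cderiv (f : C -> C) (z0 l : C) : Prop :=
  lim_at0 (fun h => (f (z0 + h) - f z0) / h) l.

Definition near0 (P : C -> Prop) : Prop :=
  exists2 d : C, 0 < d & forall k : C, 0 < `|k| < d -> P k.

Definition affine_smooth (F : C -> C -> C) : Prop :=
  forall x0 y0 : C, y0 != 0 -> F x0 y0 = 0 ->
    ~ (has_cderiv (fun x => F x y0) x0 0 /\ has_cderiv (fun y => F x0 y) y0 0).

Definition eigvec_near0 (N M : nat) (I V : int -> int -> C) (t : int)
  (x y : C -> C) (g : C -> 'cV[C]_N) : Prop :=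
  near0 (fun k => g k != 0 /\ Xmat N M I V t (y k) *m g k = x k *: g k).

End Toda.

(* the last index N-1 of 'I_N (the paper's index N); needs an inhabitant of 'I_N *)
Lemma pred_lt_ord (N : nat) (j : 'I_N) : (N.-1 < N)%N.
Proof. by case: N j => [[]|n _]. Qed.
Definition ord_last (N : nat) (j : 'I_N) : 'I_N := Ordinal (pred_lt_ord j).

(* Main.v *)
Require Import Defs.
From HB Require Import structures.
From mathcomp Require Import all_boot all_order all_algebra.
From mathcomp Require Import complex.
From mathcomp Require Import reals.
From mathcomp Require Import ring lra zify.
Import Order.TTheory GRing.Theory Num.Theory.
Set Implicit Arguments. Unset Strict Implicit.
Local Open Scope ring_scope.
Local Open Scope complex_scope.
Section L.
Variable R : realType.
Local Notation C := (R[i]).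
Definition nc (z : C) : R := Normc.normc z.
Lemma ncE (z : C) : `|z| = (nc z)%:C.
Proof. by []. Qed.
Lemma nc_ge0 z : 0 <= nc z. Proof. by case: z => a b; rewrite /nc /= sqrtr_ge0. Qed.
Lemma pos_real (d : C) : 0 < d -> d = (complex.Re d)%:C /\ 0 < complex.Re d.
Proof. case: d => a b; rewrite ltcE /= => /andP[/eqP -> h]; by split. Qed.
Arguments pos_real {d}.
Lemma ltCR (a b : R) : ((a%:C : C) < b%:C) = (a < b).
Proof. exact: ltcR. Qed.
Lemma leCR (a b : R) : ((a%:C : C) <= b%:C) = (a <= b).
Proof. exact: lecR. Qed.
Lemma nc_tri x y : nc (x + y) <= nc x + nc y.
Proof. by rewrite -leCR rmorphD /= -!ncE ler_normD. Qed.
Lemma ncM x y : nc (x * y) = nc x * nc y.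
Proof. exact: Normc.normcM. Qed.
Lemma ncV x : nc (x^-1) = (nc x)^-1.
Proof. exact: Normc.normcV. Qed.
Lemma ncN x : nc (- x) = nc x.
Proof. by apply: complexI; rewrite -!ncE normrN. Qed.
Lemma nc_eq0 x : (nc x == 0) = (x == 0).
Proof. by rewrite -(inj_eq (@complexI _)) -ncE /= normr_eq0. Qed.
Lemma nc0 : nc 0 = 0. Proof. by apply/eqP; rewrite nc_eq0. Qed.
Lemma ncR (r : R) : nc r%:C = `|r|.
Proof. by rewrite /nc /= expr0n /= addr0 sqrtr_sqr. Qed.
Lemma ncB x y : nc (x - y) = nc (y - x).
Proof. by rewrite -ncN opprB. Qed.
Lemma nc_tri2 x y : nc x <= nc y + nc (x - y).
Proof. by have := nc_tri y (x - y); rewrite addrC subrK. Qed.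
Lemma ncX x n : nc (x ^+ n) = nc x ^+ n.
Proof. elim: n => [|n IH]; first by rewrite !expr0 /nc Normc.normc1.
by rewrite !exprS ncM IH. Qed.
Lemma nc_gt0 x : (0 < nc x) = (x != 0).
Proof. by rewrite lt_def nc_ge0 nc_eq0 andbT. Qed.

Definition rl (f : C -> C) (l : C) : Prop :=
  forall e : R, 0 < e -> exists2 d : R, 0 < d & forall k, 0 < nc k < d -> nc (f k - l) < e.
Definition nr (P : C -> Prop) : Prop :=
  exists2 d : R, 0 < d & forall k, 0 < nc k < d -> P k.

Lemma lim_rl f l : lim_at0 f l <-> rl f l.
Proof.
split.
- move=> h e e0; have e0' : 0 < e%:C :> C by rewrite ltCR.
  have [d d0 hd] := h _ e0'; have [dE dp] := pos_real d0.
  exists (complex.Re d) => // k /andP[k0 kd].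
  have := hd k; rewrite !ncE -ltCR; apply.
  by rewrite dE (ltCR 0) ltCR k0 kd.
- move=> h e e0; have [eE ep] := pos_real e0.
  have [d d0 hd] := h _ ep; exists d%:C; first by rewrite (ltCR 0).
  move=> k; rewrite ncE (ltCR 0) ltCR => kk.
  by rewrite ncE eE ltCR; apply: hd.
Qed.

Lemma near_nr P : near0 P <-> nr P.
Proof.
split.
- move=> [d d0 hd]; have [dE dp] := pos_real d0.
  exists (complex.Re d) => // k /andP[k0 kd]; apply: hd.
  by rewrite ncE dE (ltCR 0) ltCR k0 kd.
- move=> [d d0 hd]; exists d%:C; first by rewrite (ltCR 0).
  by move=> k; rewrite ncE (ltCR 0) ltCR => kk; apply: hd.
Qed.

Lemma nr_and P Q : nr P -> nr Q -> nr (fun k => P k /\ Q k).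
Proof.
move=> [d1 d1p h1] [d2 d2p h2]; exists (Num.min d1 d2); first by rewrite lt_min d1p.
move=> k /andP[k0]; rewrite lt_min => /andP[a b].
by split; [apply: h1|apply: h2]; rewrite k0.
Qed.

Lemma nr_imp (P Q : C -> Prop) : (forall k, P k -> Q k) -> nr P -> nr Q.
Proof. by move=> h [d dp hd]; exists d => // k /hd/h. Qed.

Lemma nr_T : nr (fun _ => True).
Proof. by exists 1. Qed.

Lemma nr_k0 : nr (fun k => k != 0).
Proof. by exists 1 => // k /andP[]; rewrite nc_gt0. Qed.

Lemma nr_seq (I : eqType) (P : I -> C -> Prop) (s : seq I) :
  (forall i, nr (P i)) -> nr (fun k => forall i, i \in s -> P i k).
Proof.
move=> h; elim: s => [|a s IH]; first by apply: nr_imp nr_T => k _ i.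
apply: nr_imp (nr_and (h a) IH) => k [ha hs] i; rewrite inE => /orP[/eqP->//|].
exact: hs.
Qed.

Lemma nr_all (I : finType) (P : I -> C -> Prop) :
  (forall i, nr (P i)) -> nr (fun k => forall i, P i k).
Proof.
move=> h; apply: nr_imp (nr_seq (index_enum I) h) => k hk i.
by apply: hk; rewrite mem_index_enum.
Qed.

Lemma rl_eq f g l : nr (fun k => f k = g k) -> rl g l -> rl f l.
Proof.
move=> hn h e e0; have [d dp hd] := nr_and hn (h e e0).
by exists d => // k /hd [-> ].
Qed.

Lemma rl_cst c : rl (fun _ => c) c.
Proof. by move=> e e0; exists 1 => // k _; rewrite subrr nc0. Qed.

Lemma rl_id : rl (fun k => k) 0.
Proof. by move=> e e0; exists e => // k /andP[_]; rewrite subr0. Qed.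

Lemma rl_add f g l m : rl f l -> rl g m -> rl (fun k => f k + g k) (l + m).
Proof.
move=> hf hg e e0.
have e2 : 0 < e / 2 by rewrite divr_gt0.
have [d dp hd] := nr_and (hf _ e2) (hg _ e2).
exists d => // k /hd [a b].
have -> : f k + g k - (l + m) = (f k - l) + (g k - m) by ring.
apply: le_lt_trans (nc_tri _ _) _; lra.
Qed.

Lemma rl_opp f l : rl f l -> rl (fun k => - f k) (- l).
Proof.
move=> h e e0; have [d dp hd] := h e e0; exists d => // k /hd.
by rewrite -opprD ncN.
Qed.

Lemma rl_mul f g l m : rl f l -> rl g m -> rl (fun k => f k * g k) (l * m).
Proof.
move=> hf hg e e0.
set T := 2 + nc m + nc l.
have T0 : 0 < T by have := nc_ge0 m; have := nc_ge0 l; rewrite /T; lra.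
set e1 := Num.min 1 (e / T).
have e10 : 0 < e1 by rewrite lt_min ltr01 divr_gt0.
have e11 : e1 <= 1 by rewrite ge_min lexx.
have e1T : e1 <= e / T by rewrite ge_min lexx orbT.
have e1T' : e1 * T <= e by rewrite -ler_pdivlMr.
have [d dp hd] := nr_and (hf _ e10) (hg _ e10).
exists d => // k /hd [a b].
have -> : f k * g k - l * m = (f k - l) * (g k - m) + (f k - l) * m + l * (g k - m) by ring.
apply: le_lt_trans (nc_tri _ _) _.
apply: le_lt_trans (lerD (nc_tri _ _) (lexx _)) _.
rewrite !ncM.
have := nc_ge0 (f k - l); have := nc_ge0 (g k - m); have := nc_ge0 m; have := nc_ge0 l.
move: a b e1T'; rewrite /T; move: (nc (f k - l)) (nc (g k - m)) (nc m) (nc l) => A B M L.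
move=> hA hB hT *. nra.
Qed.

Lemma rl_sub f g l m : rl f l -> rl g m -> rl (fun k => f k - g k) (l - m).
Proof. by move=> hf hg; apply: rl_add hf (rl_opp hg). Qed.

Lemma rl_exp f l n : rl f l -> rl (fun k => f k ^+ n) (l ^+ n).
Proof.
move=> h; elim: n => [|n IH].
  by rewrite expr0; apply: rl_eq (rl_cst 1); apply: nr_imp nr_T => k; rewrite expr0.
rewrite exprS; apply: rl_eq (rl_mul h IH); by apply: nr_imp nr_T => k _; rewrite exprS.
Qed.

Lemma rl_inv f l : l != 0 -> rl f l -> rl (fun k => (f k)^-1) l^-1.
Proof.
move=> l0 h e e0; set a := nc l.
have a0 : 0 < a by rewrite nc_gt0.
set e1 := Num.min (a / 2) (e * a ^+ 2 / 2).
have e10 : 0 < e1 by rewrite lt_min !divr_gt0 ?exprn_gt0 ?mulr_gt0.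
have e1a : e1 <= a / 2 by rewrite ge_min lexx.
have e1e : e1 <= e * a ^+ 2 / 2 by rewrite ge_min lexx orbT.
have [d dp hd] := h _ e10; exists d => // k /hd hk.
have hfa : a <= nc (f k) + nc (l - f k) by apply: nc_tri2.
rewrite ncB in hfa.
have f0 : 0 < nc (f k) by lra.
have fk0 : f k != 0 by rewrite -nc_gt0.
have -> : (f k)^-1 - l^-1 = (l - f k) * ((f k)^-1 * l^-1).
  by field; rewrite fk0 l0.
rewrite !ncM !ncV ncB -/a.
rewrite mulrA ltr_pdivrMr // ltr_pdivrMr //.
have : e * a ^+ 2 / 2 * 2 = e * a ^+ 2 by field.
move: hk e1a e1e; rewrite expr2; nra.
Qed.

Lemma rl_unique f l1 l2 : rl f l1 -> rl f l2 -> l1 = l2.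
Proof.
move=> h1 h2; apply/eqP; apply/negPn/negP => ne.
have e0 : 0 < nc (l1 - l2) / 2 by rewrite divr_gt0 // nc_gt0 subr_eq0.
have [d dp hd] := nr_and (h1 _ e0) (h2 _ e0).
have /hd [a b] : 0 < nc (d / 2)%:C < d by rewrite ncR ger0_norm ?divr_ge0 ?ltW // divr_gt0 //=; lra.
have := nc_tri (l1 - f (d/2)%:C) (f (d/2)%:C - l2).
rewrite ncB in a.
have -> : l1 - f (d / 2)%:C + (f (d / 2)%:C - l2) = l1 - l2 by ring.
lra.
Qed.

Lemma rl_seq (I : Type) (F : I -> C -> C) (L : I -> C) (s : seq I) :
  (forall i, rl (F i) (L i)) -> rl (fun k => \sum_(i <- s) F i k) (\sum_(i <- s) L i).
Proof.
move=> h; elim: s => [|a s IH].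
  rewrite big_nil; apply: rl_eq (rl_cst 0); apply: nr_imp nr_T => k _; by rewrite big_nil.
rewrite big_cons; apply: rl_eq (rl_add (h a) IH).
by apply: nr_imp nr_T => k _; rewrite big_cons.
Qed.

Lemma rl_sum (I : finType) (F : I -> C -> C) (L : I -> C) :
  (forall i, rl (F i) (L i)) -> rl (fun k => \sum_i F i k) (\sum_i L i).
Proof. exact: rl_seq. Qed.

Lemma rl_norm f l : rl f l -> rl (fun k => (nc (f k))%:C) (nc l)%:C.
Proof.
move=> h e e0; have [d dp hd] := h e e0; exists d => // k /hd hk.
rewrite -rmorphB ncR.
have := nc_tri2 (f k) l; have := nc_tri2 l (f k); rewrite (ncB l) => *.
rewrite ltr_norml; apply/andP; split; lra.
Qed.

Lemma rl_le f l (b : C -> R) : (forall e, 0 < e -> nr (fun k => b k < e)) ->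
  nr (fun k => nc (f k - l) <= b k) -> rl f l.
Proof.
move=> hb hn e e0; have [d dp hd] := nr_and hn (hb e e0).
by exists d => // k /hd [x y]; apply: le_lt_trans x y.
Qed.

Lemma nr_sum_small (I : finType) (F : I -> C -> R) :
  (forall i e, 0 < e -> nr (fun k => F i k < e)) ->
  forall e, 0 < e -> nr (fun k => \sum_i F i k < e).
Proof.
move=> h e e0; set n := #|I|.
have n1 : 0 < n%:R + 1 :> R by rewrite ltr_wpDl ?ler0n.
have e' : 0 < e / (n%:R + 1) by rewrite divr_gt0.
apply: nr_imp (nr_all (fun i => h i _ e')) => k hk.
apply: (le_lt_trans (y := \sum_(i : I) (e / (n%:R+1)))).
  by apply: ler_sum => i _; apply: ltW.
rewrite sumr_const -/n.
have hq : e / (n%:R+1) * (n%:R+1) = e by rewrite divfK // gt_eqF.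
rewrite -[_ *+ n]mulr_natr.
move: hq e'; move: (e / (n%:R+1)) => q; have := ler0n R n; move: (n%:R : R) => m.
rewrite mulrDr mulr1 => *; lra.
Qed.

Lemma rl_nc0 f : rl f 0 -> forall e, 0 < e -> nr (fun k => nc (f k) < e).
Proof. by move=> h e e0; apply: nr_imp (h e e0) => k; rewrite subr0. Qed.

Lemma nc_sum (I : finType) (F : I -> C) : nc (\sum_i F i) <= \sum_i nc (F i).
Proof.
apply: (big_ind2 (fun a b => nc a <= b)); first by rewrite nc0.
  by move=> a1 a2 b1 b2 h1 h2; apply: le_trans (nc_tri _ _) (lerD h1 h2).
by move=> i _.
Qed.

Lemma le_sum_term (I : finType) (F : I -> R) j : (forall i, 0 <= F i) -> F j <= \sum_i F i.
Proof.
move=> h; rewrite (bigD1 j) //=; apply: ler_wpDr (lexx _).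
by apply: sumr_ge0 => i _.
Qed.

Definition ml m n (A : C -> 'M[C]_(m,n)) (A0 : 'M[C]_(m,n)) :=
  forall i j, rl (fun k => A k i j) (A0 i j).

Lemma ml_mul m n q (A : C -> 'M[C]_(m,n)) A0 (B : C -> 'M[C]_(n,q)) B0 :
  ml A A0 -> ml B B0 -> ml (fun k => A k *m B k) (A0 *m B0).
Proof.
move=> hA hB i j; rewrite mxE.
apply: rl_eq (rl_sum (fun l => rl_mul (hA i l) (hB l j))).
by apply: nr_imp nr_T => k _; rewrite mxE.
Qed.

Lemma row_id N (A A0 : 'M[C]_N) (p : 'I_N -> 'I_N) (mu : C) (w : 'cV[C]_N) i :
  (forall i j, j != p i -> A0 i j = 0) -> A *m w = mu *: w ->
  mu * w i 0 = A0 i (p i) * w (p i) 0 + \sum_j (A i j - A0 i j) * w j 0.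
Proof.
move=> hz /matrixP /(_ i 0); rewrite !mxE => <-.
have -> : \sum_j A i j * w j 0 = \sum_j A0 i j * w j 0 + \sum_j (A i j - A0 i j) * w j 0.
  by rewrite -big_split /=; apply: eq_bigr => j _; ring.
congr (_ + _); rewrite (bigD1 (p i)) //= big1 ?addr0 // => j /hz ->; by rewrite mul0r.
Qed.

Lemma rl_to0 f l : rl f l -> rl (fun k => f k - l) 0.
Proof. by move=> h e e0; have [d dp hd] := h e e0; exists d => // k /hd; rewrite subr0. Qed.

Lemma arith1 (P Q u s x : R) : 0 < P -> 0 <= Q -> 0 <= u -> 0 <= s -> 0 <= x ->
  s <= P * (Q * u + P * Q * (x * s)) -> x * (2 * P ^+ 2 * Q) < 1 -> s <= 2 * P * Q * u.
Proof.
move=> P0 Q0 u0 s0 x0 h1 h2.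
have ha : 0 <= P * P * Q * x by rewrite !mulr_ge0 // ltW.
have h3 : s <= P * Q * u + P * P * Q * x * s.
  by apply: le_trans h1 _; rewrite le_eqVlt; apply/orP; left; apply/eqP; ring.
have h4 : 2 * (P * P * Q * x) < 1.
  by apply: le_lt_trans h2; rewrite le_eqVlt; apply/orP; left; apply/eqP; ring.
have h5 : 0 <= s * (1 - 2 * (P * P * Q * x)) by apply: mulr_ge0 => //; lra.
move: h3 h5; set a := P * P * Q * x; move=> h3 h5.
have : s <= 2 * (s - a * s) by move: h5; rewrite mulrBr mulr1; lra.
move: h3; rewrite -mulrA; lra.
Qed.

Lemma chain_bound N (l : 'I_N) (p : 'I_N -> 'I_N) (A : C -> 'M[C]_N) (A0 : 'M[C]_N)
  (mu : C -> C) (mu0 : C) (w : C -> 'cV[C]_N) :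
  mu0 != 0 -> ml A A0 -> rl mu mu0 ->
  (forall i j, j != p i -> A0 i j = 0) ->
  (forall i, exists2 n, (n <= N)%N & iter n p i = l) ->
  nr (fun k => w k != 0 /\ A k *m w k = mu k *: w k) ->
  exists2 Bc, 0 < Bc & nr (fun k => [/\ w k l 0 != 0, mu k != 0,
     A k *m w k = mu k *: w k & forall j, nc (w k j 0 / w k l 0) <= Bc]).
Proof.
move=> mu0n hA hmu hz hch heig.
have N0 : (0 < N)%N by case: N l {hch hz hA w heig A A0 p} => [[]|].
pose c i := A0 i (p i).
pose m0 := nc mu0 / 2.
have m0p : 0 < m0 by rewrite divr_gt0 // nc_gt0.
pose K := (\sum_i nc (c i) + 1) / m0 + 1.
have sc0 : 0 <= \sum_i nc (c i) by apply: sumr_ge0 => i _; apply: nc_ge0.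
have Km : K * m0 = \sum_i nc (c i) + 1 + m0 by rewrite /K mulrDl divfK ?mul1r // gt_eqF.
have Kc : forall i, nc (c i) + 1 <= K * m0.
  by move=> i; rewrite Km; have := le_sum_term (F := fun i => nc (c i)) i (fun i => nc_ge0 _); lra.
have K1 : 1 <= K by rewrite /K ler_wpDl // divr_ge0 // ?ltW //; lra.
pose delta k := \sum_i \sum_j nc (A k i j - A0 i j).
have hdel : forall e, 0 < e -> nr (fun k => delta k < e).
  apply: (nr_sum_small (F := fun i k => \sum_j nc (A k i j - A0 i j))) => i.
  apply: (nr_sum_small (F := fun j k => nc (A k i j - A0 i j))) => j.
  exact: rl_nc0 (rl_to0 (hA i j)).
pose Bc := 2 * N%:R * K ^+ N.
have KN1 : 1 <= K ^+ N by rewrite exprn_ege1.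
have Np : 0 < N%:R :> R by rewrite ltr0n.
have Bcp : 0 < Bc by rewrite /Bc !mulr_gt0 // ?ltr0n // (lt_le_trans ltr01).
pose eps := (2 * N%:R ^+ 2 * K ^+ N)^-1.
have epsp : 0 < eps by rewrite invr_gt0 !mulr_gt0 ?exprn_gt0 // (lt_le_trans ltr01).
have hm : nr (fun k => m0 <= nc (mu k)).
  apply: nr_imp (hmu _ m0p) => k hk.
  have := nc_tri2 mu0 (mu k); rewrite ncB; rewrite /m0 in hk *; lra.
exists Bc => //.
apply: nr_imp (nr_and heig (nr_and hm (hdel _ epsp))) => k [[wn eig] [mk dk]].
set W := fun j => nc (w k j 0).
set S := \sum_j W j; set D := delta k.
have W0 : forall j, 0 <= W j by move=> j; apply: nc_ge0.
have S0 : 0 <= S by apply: sumr_ge0 => j _.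
have D0 : 0 <= D by apply: sumr_ge0 => i _; apply: sumr_ge0 => j _; apply: nc_ge0.
have WS : forall j, W j <= S by move=> j; apply: le_sum_term.
have mkp : 0 < nc (mu k) by lra.
have step : forall i, W i <= K * W (p i) + K * (D * S).
  move=> i; have hr := row_id i hz eig.
  set E := \sum_j _ in hr.
  have hE : nc E <= D * S.
    apply: le_trans (nc_sum _) _.
    apply: (le_trans (y := \sum_j nc (A k i j - A0 i j) * S)).
      by apply: ler_sum => j _; rewrite ncM; apply: ler_wpM2l; [apply: nc_ge0|apply: WS].
    rewrite -mulr_suml; apply: ler_wpM2r => //.
    exact: (le_sum_term (F := fun i => \sum_j nc (A k i j - A0 i j)) i (fun i => sumr_ge0 _ (fun j _ => nc_ge0 _))).
  have h1 : nc (mu k) * W i <= nc (c i) * W (p i) + D * S.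
    by rewrite /W -ncM hr; apply: le_trans (nc_tri _ _) _; rewrite ncM lerD2l.
  have h2 := Kc i.
  have h3 : K * m0 <= K * nc (mu k) by apply: ler_wpM2l => //; lra.
  have : nc (mu k) * W i <= nc (mu k) * (K * W (p i) + K * (D * S)).
    apply: le_trans h1 _; have := W0 (p i); have : 0 <= D * S by apply: mulr_ge0.
    move=> *; nra.
  by rewrite ler_pM2l.
have chain : forall n i, iter n p i = l -> W i <= K ^+ n * W l + n%:R * K ^+ n * (D * S).
  elim=> [|n IH] i; first by rewrite /= => ->; rewrite expr0 mul1r mulr0n !mul0r addr0.
  rewrite iterSr => hi.
  have h1 := IH _ hi; have h2 := step i.
  rewrite exprS mulrS.
  have : 0 <= D * S by apply: mulr_ge0.
  have : 1 <= K ^+ n by rewrite exprn_ege1.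
  have : 0 <= n%:R :> R by apply: ler0n.
  move: h1 h2; move: (K ^+ n) (n%:R : R) (D * S) (W (p i)) (W i) (W l) => a b x y z u.
  move=> h1 h2 hb ha hx.
  have K0 : 0 <= K by lra.
  have h3 : K * y <= K * (a * u + b * a * x) by apply: ler_wpM2l.
  have h4 : K * x <= K * a * x.
    rewrite -mulrA; apply: ler_wpM2l => //; rewrite -{1}(mul1r x); apply: ler_wpM2r => //.
  apply: le_trans h2 _; move: h3 h4; rewrite !mulrDr !mulrDl; lra.
have bnd : forall i, W i <= K ^+ N * W l + N%:R * K ^+ N * (D * S).
  move=> i; have [n nN hn] := hch i; apply: le_trans (chain n i hn) _.
  have e1 : K ^+ n <= K ^+ N by apply: ler_weXn2l.
  have e2 : n%:R <= N%:R :> R by rewrite ler_nat.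
  have : 0 <= D * S by apply: mulr_ge0.
  have : 1 <= K ^+ n by rewrite exprn_ege1.
  have := W0 l; have : 0 <= n%:R :> R by apply: ler0n.
  move: e1 e2; move: (K ^+ n) (K ^+ N) (n%:R : R) (N%:R : R) (D * S) (W l) => a b x y z u.
  move=> e1 e2 hx hu ha hzz.
  apply: lerD; first by apply: ler_wpM2r.
  apply: ler_wpM2r => //; apply: ler_pM => //; lra.
have Sle : S <= N%:R * (K ^+ N * W l + N%:R * K ^+ N * (D * S)).
  have : S <= \sum_(i < N) (K ^+ N * W l + N%:R * K ^+ N * (D * S)).
    by apply: ler_sum => i _; apply: bnd.
  by move=> h; rewrite sumr_const card_ord -[_ *+ N]mulr_natl in h.
pose X := 2 * N%:R ^+ 2 * K ^+ N.
have Xp : 0 < X by rewrite invr_gt0 in epsp.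
have dk' : D * X < 1.
  by rewrite -(ltr_pM2r Xp) /eps mulVf ?gt_eqF // in dk.
have SB : S <= Bc * W l.
  apply: arith1 Sle dk' => //; first by apply: le_trans KN1; apply: ler01.
have Sp : 0 < S.
  rewrite lt_def S0 andbT; apply/eqP => S00.
  move/negP: wn; apply; apply/eqP/matrixP => j z; rewrite (ord1 z) !mxE.
  apply/eqP; rewrite -nc_eq0 eq_le nc_ge0 andbT; have := WS j; by rewrite S00.
have Wlp : 0 < W l.
  have : 0 < Bc * W l by apply: lt_le_trans Sp SB.
  by rewrite pmulr_rgt0.
split.
- by rewrite -nc_gt0.
- by rewrite -nc_gt0.
- exact: eig.
- move=> j; rewrite ncM ncV -/(W j) -/(W l) ler_pdivrMr //.
  exact: le_trans (WS j) SB.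
Qed.

Lemma chain_step N (l : 'I_N) (p : 'I_N -> 'I_N) (A : C -> 'M[C]_N) (A0 : 'M[C]_N)
  (mu : C -> C) (mu0 : C) (w : C -> 'cV[C]_N) (Bc : R) :
  mu0 != 0 -> ml A A0 -> rl mu mu0 ->
  (forall i j, j != p i -> A0 i j = 0) -> 0 < Bc ->
  nr (fun k => [/\ w k l 0 != 0, mu k != 0,
     A k *m w k = mu k *: w k & forall j, nc (w k j 0 / w k l 0) <= Bc]) ->
  forall i L, rl (fun k => w k (p i) 0 / w k l 0) L ->
     rl (fun k => w k i 0 / w k l 0) (A0 i (p i) * L / mu0).
Proof.
move=> mu0n hA hmu hz Bcp hN i L hL.
pose E k := \sum_j (A k i j - A0 i j) * (w k j 0 / w k l 0).
have hE : rl E 0.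
  apply: (rl_le (b := fun k => \sum_j nc (A k i j - A0 i j) * Bc)).
    apply: (nr_sum_small (F := fun j k => nc (A k i j - A0 i j) * Bc)) => j e e0.
    have e' : 0 < e / Bc by rewrite divr_gt0.
    apply: nr_imp (rl_nc0 (rl_to0 (hA i j)) e') => k hk.
    by rewrite -ltr_pdivlMr.
  apply: nr_imp hN => k [wl mk eig hb]; rewrite subr0.
  apply: le_trans (nc_sum _) _; apply: ler_sum => j _; rewrite ncM.
  by apply: ler_wpM2l; [apply: nc_ge0|apply: hb].
have := rl_mul (rl_add (rl_mul (rl_cst (A0 i (p i))) hL) hE) (rl_inv mu0n hmu).
rewrite addr0; apply: rl_eq.
apply: nr_imp hN => k [wl mk eig hb].
have hr := row_id i hz eig.
rewrite /E.
have -> : \sum_j (A k i j - A0 i j) * (w k j 0 / w k l 0)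
   = (\sum_j (A k i j - A0 i j) * w k j 0) / w k l 0.
  by rewrite mulr_suml; apply: eq_bigr => j _; rewrite mulrA.
move: hr; set Sg := \sum_j _ => hr.
have -> : Sg = mu k * w k i 0 - A0 i (p i) * w k (p i) 0 by rewrite hr; ring.
by field; rewrite wl mk.
Qed.
End L.

Section Shift.
Variable N : nat.
Hypothesis N0 : (0 < N)%N.
Definition shift (m : nat) (i : 'I_N) : 'I_N := Ordinal (ltn_pmod (i + m) N0).

Lemma iter_shift m n (i : 'I_N) : val (iter n (shift m) i) = ((i + n * m) %% N)%N.
Proof.
elim: n => [|n IH] /=; first by rewrite mul0n addn0 modn_small ?ltn_ord.
rewrite IH modnDml mulSn.
by have -> : (i + (m + n * m) = i + n * m + m)%N by lia.
Qed.

Lemma reach m : coprime N m -> forall a b : 'I_N, exists2 n, (n <= N)%N & iter n (shift m) a = b.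
Proof.
move=> cop a b.
pose f := fun n : 'I_N => iter n (shift m) a.
have inj : injective f.
  have key : forall n1 n2 : 'I_N, (n1 <= n2)%N -> f n1 = f n2 -> n1 = n2.
    move=> n1 n2 le12 /(congr1 val); rewrite /f !iter_shift => /esym /eqP.
    rewrite eqn_modDl eqn_mod_dvd ?leq_mul2r ?le12 ?orbT // -mulnBl (Gauss_dvdl _ cop).
    move=> dv; apply: val_inj; apply/eqP; rewrite eqn_leq le12 /=.
    case: (ltnP n1 n2) => // lt.
    have := dvdn_leq _ dv; rewrite subn_gt0 => /(_ lt).
    have := ltn_ord n2; move=> h1 h2; have : (n2 - n1 < N)%N by apply: leq_ltn_trans h1; apply: leq_subr.
    by rewrite ltnNge h2.
  move=> n1 n2 h; case: (leqP n1 n2) => le; first exact: key.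
  by apply/esym/key => //; apply: ltnW.
have := injF_onto inj b; case/codomP => n hn.
by exists n; [apply: ltnW|rewrite hn].
Qed.
End Shift.

Section Main.
Variable R : realType.
Local Notation C := R[i].

Lemma chain_main N (N0 : (0 < N)%N) m (cop : coprime N m) (l : 'I_N)
  (A : C -> 'M[C]_N) (A0 : 'M[C]_N) (mu : C -> C) (mu0 : C) (w : C -> 'cV[C]_N) :
  mu0 != 0 -> ml A A0 -> rl mu mu0 ->
  (forall i j, j != shift N0 m i -> A0 i j = 0) ->
  nr (fun k => w k != 0 /\ A k *m w k = mu k *: w k) ->
  (forall i, exists2 L, rl (fun k => w k i 0 / w k l 0) L & L != 0) /\
  ((forall i, A0 i (shift N0 m i) = mu0) -> forall i, rl (fun k => w k i 0 / w k l 0) 1).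
Proof.
move=> mu0n hA hmu hz heig.
set p := shift N0 m.
have hch : forall i, exists2 n, (n <= N)%N & iter n p i = l by move=> i; apply: reach.
have [Bc Bcp hN] := chain_bound mu0n hA hmu hz hch heig.
have hst := chain_step mu0n hA hmu hz Bcp hN.
have base : rl (fun k => w k l 0 / w k l 0) 1.
  apply: rl_eq (rl_cst 1); apply: nr_imp hN => k [wl _ _ _]; by rewrite divrr // unitfE.
have ex : forall n i, iter n p i = l -> exists L, rl (fun k => w k i 0 / w k l 0) L.
  elim=> [|n IH] i; first by move=> /= ->; exists 1.
  rewrite iterSr => /IH [L hL]; by exists (A0 i (p i) * L / mu0); apply: hst.
have exi : forall i, exists L, rl (fun k => w k i 0 / w k l 0) L.
  by move=> i; have [n _ hn] := hch i; apply: ex hn.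
split.
  have nz : forall n i, iter n p l = i -> forall L, rl (fun k => w k i 0 / w k l 0) L -> L != 0.
    elim=> [|n IH] i.
      move=> /= <- L hL; by rewrite -(rl_unique base hL) oner_eq0.
    rewrite iterS => <- L hL.
    have [Lj hLj] := exi (iter n p l).
    have Lj0 := IH _ erefl _ hLj.
    have := rl_unique hLj (hst _ _ hL).
    by move=> e; apply: contraNneq Lj0 => L0; rewrite e L0 mulr0 mul0r.
  move=> i; have [L hL] := exi i; exists L => //.
  have [n _ hn] := reach N0 cop l i; exact: nz hn L hL.
move=> hc.
have one : forall n i, iter n p i = l -> rl (fun k => w k i 0 / w k l 0) 1.
  elim=> [|n IH] i; first by move=> /= ->.
  rewrite iterSr => /IH h1; have := hst _ _ h1.
  by rewrite hc mulr1 divrr // unitfE.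
by move=> i; have [n _ hn] := hch i; apply: one hn.
Qed.
End Main.

Section Mats.
Variable R : realType.
Local Notation C := R[i].

Lemma rl_eqk (f g : C -> C) l : (forall k, k != 0 -> f k = g k) -> rl g l -> rl f l.
Proof. by move=> h hg; apply: rl_eq hg; apply: nr_imp h (nr_k0 _). Qed.

Lemma rl_ind (b : bool) (f : C -> C) l : (b -> rl f l) -> rl (fun k => b%:R * f k) (b%:R * l).
Proof.
case: b => h.
  have -> : (true%:R * l) = l by rewrite mul1r.
  by apply: rl_eq (h erefl); apply: nr_imp (nr_T _) => k _; rewrite mul1r.
rewrite mul0r; apply: rl_eq (rl_cst 0); apply: nr_imp (nr_T _) => k _; by rewrite mul0r.
Qed.

Definition cj N (s : 'I_N -> C) (Y : 'M[C]_N) : 'M[C]_N :=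
  \matrix_(i, j) (Y i j * s i / s j).

Lemma cj_mul N (s : 'I_N -> C) Y Z : (forall i, s i != 0) -> cj s (Y *m Z) = cj s Y *m cj s Z.
Proof.
move=> hs; apply/matrixP => i j; rewrite !mxE mulr_suml mulr_suml; apply: eq_bigr => l _.
rewrite !mxE; by field; rewrite !hs.
Qed.

Lemma cj1 N (s : 'I_N -> C) : (forall i, s i != 0) -> cj s 1%:M = 1%:M.
Proof.
move=> hs; apply/matrixP => i j; rewrite !mxE; case: eqP => [->|_]; last by rewrite !mul0r.
by rewrite mulr1n mul1r divrr // unitfE.
Qed.

Lemma cj_eig N (s : 'I_N -> C) (X : 'M[C]_N) (g : 'cV[C]_N) (x kap : C) :
  (forall i, s i != 0) -> X *m g = x *: g ->
  (kap *: cj s X) *m (\col_i (g i 0 * s i)) = (kap * x) *: \col_i (g i 0 * s i).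
Proof.
move=> hs /matrixP he; apply/matrixP => i z; rewrite (ord1 z) !mxE.
have := he i 0; rewrite !mxE => e.
have -> : \sum_j (kap *: cj s X) i j * (\col_i0 (g i0 0 * s i0)) j 0
    = kap * s i * \sum_j X i j * g j 0.
  rewrite mulr_sumr; apply: eq_bigr => j _; rewrite !mxE; by field; rewrite hs.
by rewrite e; ring.
Qed.

Lemma col_neq0 N (s : 'I_N -> C) (g : 'cV[C]_N) :
  (forall i, s i != 0) -> g != 0 -> \col_i (g i 0 * s i) != 0.
Proof.
move=> hs gn; apply/eqP => /matrixP h; move/eqP: gn; apply; apply/matrixP => i z; rewrite (ord1 z).
have := h i 0; rewrite !mxE => /eqP; rewrite mulf_eq0 (negbTE (hs i)) orbF => /eqP ->.
by [].
Qed.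
End Mats.

Section Common.
Variable R : realType.
Local Notation C := R[i].

Lemma ml_eqk m n (A B : C -> 'M[C]_(m,n)) A0 :
  (forall k, k != 0 -> A k = B k) -> ml B A0 -> ml A A0.
Proof. by move=> h hB i j; apply: rl_eqk (hB i j) => k /h ->. Qed.

Lemma ml_cst m n (A0 : 'M[C]_(m,n)) : ml (fun _ => A0) A0.
Proof. by move=> i j; apply: rl_cst. Qed.

Lemma sum_delta N (a : 'I_N) (F : 'I_N -> C) : \sum_l (l == a)%:R * F l = F a.
Proof.
rewrite (bigD1 a) //= eqxx mul1r big1 ?addr0 // => l /negbTE ->; by rewrite mul0r.
Qed.

Lemma shift_val N (N0 : (0 < N)%N) m (i : 'I_N) : val (shift N0 m i) = ((i + m) %% N)%N.
Proof. by []. Qed.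

Lemma shiftD N (N0 : (0 < N)%N) m (i : 'I_N) : shift N0 m (shift N0 1 i) = shift N0 m.+1 i.
Proof.
apply: val_inj; rewrite !shift_val modnDml.
by have -> : (i + 1 + m = i + m.+1)%N by rewrite addn1 addSnnS.
Qed.

Lemma shift0 N (N0 : (0 < N)%N) (i : 'I_N) : shift N0 0 i = i.
Proof. by apply: val_inj; rewrite shift_val addn0 modn_small. Qed.
End Common.

Section Part1.
Variable R : realType.
Local Notation C := R[i].
Variables (N : nat) (I V : int -> int -> C) (t : int) (y : C -> C).
Hypothesis N0 : (0 < N)%N.
Hypothesis hy : rl (fun k => k ^+ N * y k) 1.

Definition s1 (k : C) (i : 'I_N) : C := k ^+ i.+1.
Lemma s1_neq0 k : k != 0 -> forall i, s1 k i != 0.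
Proof. by move=> k0 i; rewrite expf_neq0. Qed.

Definition P0 : 'M[C]_N := \matrix_(i, j)
  ((j == i.+1 :> nat)%:R + ((i == N.-1 :> nat) && (j == 0 :> nat))%:R).

Lemma Rlim1 tau : ml (fun k => k *: cj (s1 k) (Rmat N I tau (y k))) P0.
Proof.
move=> i j.
apply: (rl_eqk (g := fun k =>
   (i == j)%:R * (k * I (i.+1)%:Z tau * k ^+ i.+1 / k ^+ j.+1)
 + (j == i.+1 :> nat)%:R * (k * k ^+ i.+1 / k ^+ j.+1)
 + ((i == N.-1 :> nat) && (j == 0 :> nat))%:R * (k * y k * k ^+ i.+1 / k ^+ j.+1))).
  by move=> k _; rewrite !mxE /s1; ring.
have -> : P0 i j = (i == j)%:R * 0 + (j == i.+1 :> nat)%:R * 1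
    + ((i == N.-1 :> nat) && (j == 0 :> nat))%:R * 1 by rewrite mxE mulr0 !mulr1 add0r.
apply: rl_add; first apply: rl_add.
- apply: rl_ind => /eqP <-.
  have := rl_mul (@rl_id R) (rl_cst (I (i.+1)%:Z tau)); rewrite mul0r.
  by apply: rl_eqk => k k0; field; rewrite expf_neq0.
- apply: rl_ind => /eqP ->; apply: rl_eqk (rl_cst 1) => k k0.
  by rewrite [k ^+ i.+2]exprS; field; rewrite k0 expf_neq0.
- apply: rl_ind => /andP[/eqP -> /eqP ->]; rewrite prednK //.
  by apply: rl_eqk hy => k k0; rewrite expr1; field.
Qed.

Lemma Llim1 : ml (fun k => cj (s1 k) (Lmat N V t (y k))) 1%:M.
Proof.
move=> i j.
apply: (rl_eqk (g := fun k =>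
   (i == j)%:R * (k ^+ i.+1 / k ^+ j.+1)
 + (i == j.+1 :> nat)%:R * (V (j.+1)%:Z t * k ^+ i.+1 / k ^+ j.+1)
 + ((i == 0 :> nat) && (j == N.-1 :> nat))%:R * (V N%:Z t / y k * k ^+ i.+1 / k ^+ j.+1))).
  by move=> k _; rewrite !mxE /s1; ring.
have -> : (1%:M : 'M[C]_N) i j = (i == j)%:R * 1 + (i == j.+1 :> nat)%:R * 0
    + ((i == 0 :> nat) && (j == N.-1 :> nat))%:R * 0 by rewrite mxE !mulr0 mulr1 !addr0.
apply: rl_add; first apply: rl_add.
- apply: rl_ind => /eqP <-; apply: rl_eqk (rl_cst 1) => k k0.
  by rewrite divrr // unitfE expf_neq0.
- apply: rl_ind => /eqP ->.
  have := rl_mul (rl_cst (V (j.+1)%:Z t)) (@rl_id R); rewrite mulr0.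
  by apply: rl_eqk => k k0; rewrite [k ^+ j.+2]exprS; field; rewrite expf_neq0.
- apply: rl_ind => /andP[/eqP -> /eqP ->]; rewrite prednK //.
  have := rl_mul (rl_mul (rl_cst (V N%:Z t)) (@rl_id R)) (rl_inv (oner_neq0 _) hy).
  rewrite mulr0 mul0r; apply: rl_eqk => k k0.
  rewrite invfM expr1; move: (y k)^-1 => z; by field; rewrite expf_neq0.
Qed.

Fixpoint P0pow (m : nat) : 'M[C]_N :=
  match m with 0 => 1%:M | m'.+1 => P0 *m P0pow m' end.

Lemma Rplim1 m : ml (fun k => k ^+ m *: cj (s1 k) (Rprod N I t m (y k))) (P0pow m).
Proof.
elim: m => [|m IH].
  apply: ml_eqk (ml_cst _) => k k0 /=; by rewrite expr0 scale1r cj1 //; apply: s1_neq0.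
apply: ml_eqk (ml_mul (Rlim1 (t + m%:Z)) IH) => k k0 /=.
rewrite cj_mul; last by apply: s1_neq0.
by rewrite exprS -scalerA scalemxAr scalemxAl.
Qed.

Lemma P0E i l : P0 i l = (l == shift N0 1 i)%:R.
Proof.
rewrite mxE -val_eqE shift_val.
have hi := ltn_ord i; have hl := ltn_ord l.
case: (ltnP i.+1 N) => h.
  rewrite addn1 modn_small //.
  have -> : (i == N.-1 :> nat) = false by apply/eqP => e; move: h; rewrite e prednK // ltnn.
  by rewrite andFb addr0.
have e : (i : nat) = N.-1 by apply/eqP; rewrite eqn_leq -ltnS prednK // hi /= -ltnS prednK.
rewrite e eqxx /= addn1 prednK // modnn.
have -> : (l == N :> nat) = false by apply/eqP => e'; move: hl; rewrite e' ltnn.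
by rewrite add0r.
Qed.

Lemma P0powE m i j : P0pow m i j = (j == shift N0 m i)%:R.
Proof.
elim: m i j => [|m IH] i j /=.
  by rewrite mxE shift0 eq_sym.
rewrite mxE.
under eq_bigr => l _ do rewrite P0E IH.
by rewrite sum_delta shiftD.
Qed.
End Part1.

Lemma part1 (R : realType) (N M : nat) (I V : int -> int -> R[i]) (t : int)
  (hN : (0 < N)%N) (cop : coprime N M)
  (x y : R[i] -> R[i]) (g : R[i] -> 'cV[R[i]]_N) :
  lim_at0 (fun k => k ^+ M * x k) 1 -> lim_at0 (fun k => k ^+ N * y k) 1 ->
  eigvec_near0 M I V t x y g -> forall j : 'I_N, (j.+1 < N)%N ->
  lim_at0 (fun k => g k j 0 / g k (ord_last j) 0 / k ^+ (N - j.+1)) 1.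
Proof.
move=> /lim_rl hx /lim_rl hy /near_nr heig j hj; apply/lim_rl.
pose A := fun k => k ^+ M *: cj (s1 k) (Xmat N M I V t (y k)).
have hA : ml A (1%:M *m P0pow R N M).
  apply: ml_eqk (ml_mul (Llim1 V t hN hy) (Rplim1 I t hN hy M)) => k k0.
  by rewrite /A /Xmat cj_mul ?scalemxAr //; apply: s1_neq0.
pose w := fun k => \col_i (g k i 0 * s1 k i).
have heig' : nr (fun k => w k != 0 /\ A k *m w k = (k ^+ M * x k) *: w k).
  apply: nr_imp (nr_and heig (nr_k0 _)) => k [[gn e] k0]; split.
    by apply: col_neq0 => //; apply: s1_neq0.
  by apply: cj_eig => //; apply: s1_neq0.
have hz : forall i j', j' != shift hN M i -> (1%:M *m P0pow R N M) i j' = 0.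
  by move=> i j' h; rewrite mul1mx P0powE (negbTE h).
have [_ h2] := chain_main cop (ord_last j) (oner_neq0 _) hA hx hz heig'.
have hc : forall i, (1%:M *m P0pow R N M) i (shift hN M i) = 1.
  by move=> i; rewrite mul1mx P0powE eqxx.
have := h2 hc j.
apply: rl_eqk => k k0; rewrite !mxE /s1 /=.
rewrite prednK //.
have -> : k ^+ N = k ^+ j.+1 * k ^+ (N - j.+1) by rewrite -exprD subnKC // ltnW.
rewrite invfM; move: (g k (ord_last j) 0)^-1 => z.
by field; rewrite !expf_neq0.
Qed.

Section Part2.
Variable R : realType.
Local Notation C := R[i].
Variables (N : nat) (I V : int -> int -> C) (t : int) (y : C -> C) (b : C).
Hypothesis N0 : (0 < N)%N.
Hypothesis b0 : b != 0.
Hypothesis hy : rl (fun k => y k / k ^+ N) b.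

Definition s2 (k : C) (i : 'I_N) : C := (k ^+ i.+1)^-1.
Lemma s2_neq0 k : k != 0 -> forall i, s2 k i != 0.
Proof. by move=> k0 i; rewrite invr_eq0 expf_neq0. Qed.

Definition Dg (tau : int) : 'M[C]_N := \matrix_(i, j) ((i == j)%:R * I (i.+1)%:Z tau).

Lemma Rlim2 tau : ml (fun k => cj (s2 k) (Rmat N I tau (y k))) (Dg tau).
Proof.
move=> i j.
apply: (rl_eqk (g := fun k =>
   (i == j)%:R * (I (i.+1)%:Z tau * (k ^+ i.+1)^-1 / (k ^+ j.+1)^-1)
 + (j == i.+1 :> nat)%:R * ((k ^+ i.+1)^-1 / (k ^+ j.+1)^-1)
 + ((i == N.-1 :> nat) && (j == 0 :> nat))%:R * (y k * (k ^+ i.+1)^-1 / (k ^+ j.+1)^-1))).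
  by move=> k _; rewrite !mxE /s2; ring.
have -> : Dg tau i j = (i == j)%:R * I (i.+1)%:Z tau + (j == i.+1 :> nat)%:R * 0
    + ((i == N.-1 :> nat) && (j == 0 :> nat))%:R * 0 by rewrite mxE !mulr0 !addr0.
apply: rl_add; first apply: rl_add.
- apply: rl_ind => /eqP <-; apply: rl_eqk (rl_cst _) => k k0.
  by field; rewrite expf_neq0.
- apply: rl_ind => /eqP ->; apply: rl_eqk (@rl_id R) => k k0.
  by rewrite [k ^+ i.+2]exprS; field; rewrite k0 expf_neq0.
- apply: rl_ind => /andP[/eqP -> /eqP ->]; rewrite prednK //.
  have := rl_mul hy (@rl_id R); rewrite mulr0.
  by apply: rl_eqk => k k0; rewrite expr1; field; rewrite expf_neq0.
Qed.

Definition Q2 : 'M[C]_N := \matrix_(i, j)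
  ((i == j.+1 :> nat)%:R * V (j.+1)%:Z t + ((i == 0 :> nat) && (j == N.-1 :> nat))%:R * (V N%:Z t / b)).

Lemma Llim2 : ml (fun k => k *: cj (s2 k) (Lmat N V t (y k))) Q2.
Proof.
move=> i j.
apply: (rl_eqk (g := fun k =>
   (i == j)%:R * (k * (k ^+ i.+1)^-1 / (k ^+ j.+1)^-1)
 + (i == j.+1 :> nat)%:R * (k * V (j.+1)%:Z t * (k ^+ i.+1)^-1 / (k ^+ j.+1)^-1)
 + ((i == 0 :> nat) && (j == N.-1 :> nat))%:R * (k * (V N%:Z t / y k) * (k ^+ i.+1)^-1 / (k ^+ j.+1)^-1))).
  by move=> k _; rewrite !mxE /s2; ring.
have -> : Q2 i j = (i == j)%:R * 0 + (i == j.+1 :> nat)%:R * V (j.+1)%:Z t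
    + ((i == 0 :> nat) && (j == N.-1 :> nat))%:R * (V N%:Z t / b) by rewrite mxE mulr0 add0r.
apply: rl_add; first apply: rl_add.
- apply: rl_ind => /eqP <-; apply: rl_eqk (@rl_id R) => k k0.
  by field; rewrite expf_neq0.
- apply: rl_ind => /eqP ->; apply: rl_eqk (rl_cst _) => k k0.
  by rewrite [k ^+ j.+2]exprS; field; rewrite k0 expf_neq0.
- apply: rl_ind => /andP[/eqP -> /eqP ->]; rewrite prednK //.
  have := rl_mul (rl_cst (V N%:Z t)) (rl_inv b0 hy).
  apply: rl_eqk => k k0; rewrite expr1 invf_div.
  by move: (y k)^-1 => z; field; rewrite k0 expf_neq0.
Qed.

Fixpoint Dpow (m : nat) : 'M[C]_N :=
  match m with 0 => 1%:M | m'.+1 => Dg (t + m'%:Z) *m Dpow m' end.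

Lemma Rplim2 m : ml (fun k => cj (s2 k) (Rprod N I t m (y k))) (Dpow m).
Proof.
elim: m => [|m IH].
  apply: ml_eqk (ml_cst _) => k k0 /=; by rewrite cj1 //; apply: s2_neq0.
apply: ml_eqk (ml_mul (Rlim2 (t + m%:Z)) IH) => k k0 /=.
by rewrite cj_mul //; apply: s2_neq0.
Qed.

Lemma Dpow_diag m i j : i != j -> Dpow m i j = 0.
Proof.
elim: m i j => [|m IH] i j ij /=; first by rewrite mxE (negbTE ij).
rewrite mxE (bigD1 i) //= big1 ?addr0.
  by rewrite IH // mulr0.
by move=> l li; rewrite mxE eq_sym (negbTE li) !mul0r.
Qed.

Lemma A0_zero m i j : j != shift N0 N.-1 i -> (Q2 *m Dpow m) i j = 0.
Proof.
move=> h; rewrite mxE (bigD1 j) //= big1 ?addr0.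
  rewrite mxE.
  have -> : (i == j.+1 :> nat) = false.
    apply/eqP => e; move/eqP: h; apply; apply: val_inj; rewrite shift_val e.
    have -> : (j.+1 + N.-1 = j + N)%N by rewrite addSn -addnS prednK.
    by rewrite modnDr modn_small.
  have -> : ((i == 0 :> nat) && (j == N.-1 :> nat)) = false.
    apply/andP => -[/eqP e1 /eqP e2]; move/eqP: h; apply; apply: val_inj.
    by rewrite shift_val e1 add0n modn_small ?prednK.
  by rewrite !mul0r add0r mul0r.
by move=> l lj; rewrite Dpow_diag ?mulr0.
Qed.
End Part2.

Lemma part2 (R : realType) (N M : nat) (I V : int -> int -> R[i]) (t : int)
  (hN : (0 < N)%N)
  (x y : R[i] -> R[i]) (g : R[i] -> 'cV[R[i]]_N) (a b : R[i]) :
  a != 0 -> b != 0 ->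
  lim_at0 (fun k => k * x k) a -> lim_at0 (fun k => y k / k ^+ N) b ->
  eigvec_near0 M I V t x y g -> forall j : 'I_N, (j.+1 < N)%N ->
  exists c : R[i], 0 < c /\
    lim_at0 (fun k => `| g k j 0 / g k (ord_last j) 0 | * `|k| ^+ (N - j.+1)) c.
Proof.
move=> a0 b0 /lim_rl hx /lim_rl hy /near_nr heig j hj.
pose A := fun k => k *: cj (s2 k) (Xmat N M I V t (y k)).
have hA : ml A (Q2 N V t b *m Dpow N I t M).
  apply: ml_eqk (ml_mul (Llim2 V t hN b0 hy) (Rplim2 I t hN hy M)) => k k0.
  by rewrite /A /Xmat cj_mul ?scalemxAl //; apply: s2_neq0.
pose w := fun k => \col_i (g k i 0 * s2 k i).
have heig' : nr (fun k => w k != 0 /\ A k *m w k = (k * x k) *: w k).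
  apply: nr_imp (nr_and heig (nr_k0 _)) => k [[gn e] k0]; split.
    by apply: col_neq0 => //; apply: s2_neq0.
  by apply: cj_eig => //; apply: s2_neq0.
have cop : coprime N N.-1 by case: N hN {A hA w heig' g heig hy j hj} => // n _; apply: coprimeSn.
have hz : forall i j', j' != shift hN N.-1 i -> (Q2 N V t b *m Dpow N I t M) i j' = 0.
  by move=> i j' h; apply: (A0_zero I V t b M h).
have [h1 _] := chain_main cop (ord_last j) a0 hA hx hz heig'.
have [L hL L0] := h1 j.
exists `|L|; split; first by rewrite normr_gt0.
apply/lim_rl; rewrite ncE.
apply: rl_eqk (rl_norm hL) => k k0.
rewrite -ncE !mxE /s2 /= prednK //.
have -> : g k j 0 * (k ^+ j.+1)^-1 / (g k (ord_last j) 0 * (k ^+ N)^-1)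
    = g k j 0 / g k (ord_last j) 0 * k ^+ (N - j.+1).
  have -> : k ^+ N = k ^+ j.+1 * k ^+ (N - j.+1) by rewrite -exprD subnKC // ltnW.
  rewrite invfM; move: (g k (ord_last j) 0)^-1 => z.
  by field; rewrite !expf_neq0.
by rewrite [in RHS]normrM normrX.
Qed.

Unset Implicit Arguments.

Theorem lemmaA1 (R : realType) (N M : nat) (I V : int -> int -> R[i]) (t : int) :
  (0 < N)%N -> (0 < M)%N -> coprime N M ->
  hpdToda N M I V ->
  affine_smooth (specF N M I V t) ->
  (* (i) around P: x = k^-M + ..., y = k^-N + ... *)
  (forall (x y : R[i] -> R[i]) (g : R[i] -> 'cV[R[i]]_N),
     near0 (fun k => specF N M I V t (x k) (y k) = 0) ->
     lim_at0 (fun k => k ^+ M * x k) 1 ->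
     lim_at0 (fun k => k ^+ N * y k) 1 ->
     eigvec_near0 M I V t x y g ->
     forall j : 'I_N, (j.+1 < N)%N ->
       lim_at0 (fun k => g k j 0 / g k (ord_last j) 0 / k ^+ (N - j.+1)) 1)
  /\
  (* (ii) around Q: x ~ a k^-1, y ~ b k^N for a local coordinate k *)
  (forall (x y : R[i] -> R[i]) (g : R[i] -> 'cV[R[i]]_N) (a b : R[i]),
     a != 0 -> b != 0 ->
     near0 (fun k => specF N M I V t (x k) (y k) = 0) ->
     lim_at0 (fun k => k * x k) a ->
     lim_at0 (fun k => y k / k ^+ N) b ->
     eigvec_near0 M I V t x y g ->
     forall j : 'I_N, (j.+1 < N)%N ->
       exists c : R[i], 0 < c /\
         lim_at0 (fun k => `| g k j 0 / g k (ord_last j) 0 | * `|k| ^+ (N - j.+1)) c).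
Proof.
move=> hN hM cop _ _; split.
- move=> x y g _ hx hy heig j hj; exact: (part1 hN cop hx hy heig hj).
- move=> x y g a b a0 b0 _ hx hy heig j hj; exact: (part2 hN a0 b0 hx hy heig hj).
Qed.
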